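(* Let $f=\frac1n\sum_{i=1}^n f_i$ where each $f_i:\mathbb{R}^d\to\mathbb{R}$ is $L$-smooth, and assume moreover that either each $f_i$ is $\mu$-strongly convex for some $\mu>0$, or $\inf_x f(x)>-\infty$. Then the iterates of No Full Grad SVRG (described in the context) satisfy, for every epoch $s$, $$\Big\|\nabla f(\omega_s)-\frac1n\sum_{t=0}^{n-1}v_s^t\Big\|^2\le 2\|\nabla f(\omega_s)-v_s\|^2+\frac{2L^2}{n}\sum_{t=0}^{n-1}\|x_s^t-\omega_s\|^2.$$
   Context: No Full Grad SVRG: input $x_0^0\in\mathbb{R}^d$, $\omega_0=x_0^0$, $\tilde v_0^0=0$, $v_0=0$, stepsize $\gamma>0$. For epochs $s=0,1,\dots$: choose a permutation $\pi_s^0,\dots,\pi_s^{n-1}$ of the $n$ component indices (by any shuffling rule); for $t=0,\dots,n-1$ set $\tilde v_s^{t+1}=\frac{t}{t+1}\tilde v_s^t+\frac1{t+1}\nabla f_{\pi_s^t}(x_s^t)$, $v_s^t=\nabla f_{\pi_s^t}(x_s^t)-\nabla f_{\pi_s^t}(\omega_s)+v_s$, $x_s^{t+1}=x_s^t-\gamma v_s^t$; then $x_{s+1}^0=x_s^n$, $\omega_{s+1}=x_s^n$, $\tilde v_{s+1}^0=0$, $v_{s+1}=\tilde v_s^n$. *)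

(* Defs.v *)
From HB Require Import structures.
From mathcomp Require Import all_boot all_order all_algebra.
From mathcomp Require Import all_classical all_reals all_analysis.
Set Implicit Arguments. Unset Strict Implicit. Unset Printing Implicit Defensive.
Import Order.TTheory GRing.Theory Num.Theory.
Import numFieldNormedType.Exports.
Local Open Scope ring_scope.

Section NFG.
Variables (R : realType) (d : nat).

Definition dotv (u v : 'rV[R]_d) : R := \sum_(j < d) u ord0 j * v ord0 j.
Definition sqnorm (u : 'rV[R]_d) : R := dotv u u.
Definition enorm (u : 'rV[R]_d) : R := Num.sqrt (sqnorm u).

Definition is_gradient (f : 'rV[R]_d -> R) (gf : 'rV[R]_d -> 'rV[R]_d) : Prop :=
  forall x, differentiable f x /\ forall h, 'd f x h = dotv (gf x) h.

Definition L_smooth (L : R) (f : 'rV[R]_d -> R) (gf : 'rV[R]_d -> 'rV[R]_d) : Prop :=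
  is_gradient f gf /\ forall x y, enorm (gf x - gf y) <= L * enorm (x - y).

Definition strongly_convex (mu : R) (f : 'rV[R]_d -> R) (gf : 'rV[R]_d -> 'rV[R]_d) : Prop :=
  forall x y, f x + dotv (gf x) (y - x) + mu / 2 * sqnorm (y - x) <= f y.

Variables (n : nat) (g : 'I_n -> 'rV[R]_d -> 'rV[R]_d) (gamma : R).

(* Inner loop of epoch s, given x_s^0 = x0, omega_s = w, v_s = v and the
   epoch's ordering ps t = pi_s^t. *)
Fixpoint inner_x (ps : nat -> 'I_n) (x0 w v : 'rV[R]_d) (t : nat) : 'rV[R]_d :=
  match t with
  | 0 => x0
  | t'.+1 => let x := inner_x ps x0 w v t' in
             x - gamma *: (g (ps t') x - g (ps t') w + v)
  end.

Definition inner_v (ps : nat -> 'I_n) (x0 w v : 'rV[R]_d) (t : nat) : 'rV[R]_d :=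
  let x := inner_x ps x0 w v t in g (ps t) x - g (ps t) w + v.

Fixpoint inner_vtil (ps : nat -> 'I_n) (x0 w v : 'rV[R]_d) (t : nat) : 'rV[R]_d :=
  match t with
  | 0 => 0
  | t'.+1 => (t'%:R / t'.+1%:R) *: inner_vtil ps x0 w v t'
             + (t'.+1%:R)^-1 *: g (ps t') (inner_x ps x0 w v t')
  end.

(* Epoch states (x_s^0, omega_s, v_s); pi s t = pi_s^t. *)
Fixpoint epoch (pi : nat -> nat -> 'I_n) (xinit : 'rV[R]_d) (s : nat)
  : 'rV[R]_d * 'rV[R]_d * 'rV[R]_d :=
  match s with
  | 0 => (xinit, xinit, 0)
  | s'.+1 => let: (x0, w, v) := epoch pi xinit s' in
             (inner_x (pi s') x0 w v n, inner_x (pi s') x0 w v n,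
              inner_vtil (pi s') x0 w v n)
  end.

Definition xs pi xinit s t := let: (x0, w, v) := epoch pi xinit s in inner_x (pi s) x0 w v t.
Definition ws pi xinit s := (epoch pi xinit s).1.2.
Definition vs pi xinit s := (epoch pi xinit s).2.
Definition vst pi xinit s t := let: (x0, w, v) := epoch pi xinit s in inner_v (pi s) x0 w v t.

End NFG.

(* Main.v *)
Require Import Defs.
From HB Require Import structures.
From mathcomp Require Import all_boot all_order all_algebra.
From mathcomp Require Import all_classical all_reals all_analysis.
From mathcomp Require Import ring lra.
Import Order.TTheory GRing.Theory Num.Theory.
Import numFieldNormedType.Exports.
Local Open Scope ring_scope.

Lemma avg_sq (R : realType) n (hn : (0 < n)%N) (c : 'I_n -> R) :
  (n%:R^-1 * \sum_(t < n) c t) ^+ 2 <= n%:R^-1 * \sum_(t < n) c t ^+ 2.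
Proof.
set m := n%:R^-1 * _.
have hn0 : (n%:R : R) != 0 by rewrite pnatr_eq0 -lt0n.
have hS : \sum_(t < n) c t = n%:R * m by rewrite /m mulrA mulfV // mul1r.
have h0 : 0 <= \sum_(t < n) (c t - m) ^+ 2 by apply: sumr_ge0 => t _; exact: sqr_ge0.
have e : \sum_(t < n) (c t - m) ^+ 2 = \sum_(t < n) c t ^+ 2 - 2 * m * \sum_(t < n) c t + n%:R * m ^+ 2.
  rewrite (eq_bigr (fun t => c t ^+ 2 - 2 * m * c t + m ^+ 2)); last by move=> t _; ring.
  rewrite !big_split /= sumrN -mulr_sumr sumr_const card_ord.
  rewrite -mulr_natl; ring.
rewrite e hS in h0.
have hp : 0 < (n%:R : R)^-1 by rewrite invr_gt0 ltr0n.
have hnp : 0 < (n%:R:R) by rewrite ltr0n.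
rewrite -(ler_pM2l hnp) mulVKf //.

nra.
Qed.

Lemma sq_sub (R : realType) d (a b : 'rV[R]_d) :
  sqnorm (a - b) <= 2 * sqnorm a + 2 * sqnorm b.
Proof.
rewrite /sqnorm /dotv !mulr_sumr -big_split /=; apply: ler_sum => j _.
rewrite !mxE; set p := a ord0 j; set q := b ord0 j.
have := sqr_ge0 (p + q); rewrite expr2 => h; nra.
Qed.

Lemma avg_vec (R : realType) d n (hn : (0 < n)%N) (u : 'I_n -> 'rV[R]_d) :
  sqnorm (n%:R^-1 *: \sum_(t < n) u t) <= n%:R^-1 * \sum_(t < n) sqnorm (u t).
Proof.
rewrite /sqnorm /dotv exchange_big mulr_sumr /=; apply: ler_sum => j _.
rewrite !mxE summxE -!expr2; under [X in _ <= _ * X]eq_bigr do rewrite -expr2.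
exact: avg_sq.
Qed.

Lemma smooth_sq (R : realType) d L f (gi : 'rV[R]_d -> 'rV[R]_d) x y :
  L_smooth L f gi -> sqnorm (gi x - gi y) <= L ^+ 2 * sqnorm (x - y).
Proof.
move=> [_ /(_ x y)]; rewrite /enorm => h.
have s0 : forall u : 'rV[R]_d, 0 <= sqnorm u.
  by move=> u; apply: sumr_ge0 => j _; rewrite -expr2; exact: sqr_ge0.
have := sqrtr_ge0 (sqnorm (gi x - gi y)) => h1.
have h2 : 0 <= L * Num.sqrt (sqnorm (x - y)) by apply: le_trans h.
have h3 : Num.sqrt (sqnorm (gi x - gi y)) ^+ 2 <= (L * Num.sqrt (sqnorm (x - y))) ^+ 2.
  by rewrite ler_sqr // ?nnegrE.
by rewrite exprMn !sqr_sqrtr in h3.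
Qed.

Theorem lemma1 (R : realType) (d n : nat) (hn : (0 < n)%N)
  (f : 'I_n -> 'rV[R]_d -> R) (g : 'I_n -> 'rV[R]_d -> 'rV[R]_d)
  (F : 'rV[R]_d -> R) (gF : 'rV[R]_d -> 'rV[R]_d) (L gamma : R)
  (xinit : 'rV[R]_d) (pi : nat -> nat -> 'I_n) :
  (forall x, F x = n%:R^-1 * \sum_(i < n) f i x) ->
  is_gradient F gF ->
  (forall i, L_smooth L (f i) (g i)) ->
  ((exists mu : R, 0 < mu /\ forall i, strongly_convex mu (f i) (g i)) \/
   (exists m : R, forall x, m <= F x)) ->
  0 < gamma ->
  (forall s, perm_eq [seq pi s t | t <- iota 0 n] (enum 'I_n)) ->
  forall s : nat,
    let w := ws g gamma pi xinit s in
    sqnorm (gF w - n%:R^-1 *: \sum_(t < n) vst g gamma pi xinit s t)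
    <= 2 * sqnorm (gF w - vs g gamma pi xinit s)
       + 2 * L ^+ 2 / n%:R * \sum_(t < n) sqnorm (xs g gamma pi xinit s t - w).
Proof.
move=> _ _ hL _ _ _ s /=.
rewrite /ws /vs /vst /xs.
case: (epoch g gamma pi xinit s) => [[x0 w] v] /=.
set u := fun t : 'I_n => g (pi s t) (inner_x g gamma (pi s) x0 w v t) - g (pi s t) w.
have hn0 : (n%:R : R) != 0 by rewrite pnatr_eq0 -lt0n.
have -> : gF w - n%:R^-1 *: \sum_(t < n) inner_v g gamma (pi s) x0 w v t
   = (gF w - v) - n%:R^-1 *: \sum_(t < n) u t.
  rewrite /inner_v /u big_split /= sumr_const card_ord scalerDr.
  have -> : n%:R^-1 *: (v *+ n) = v.
  by rewrite -[v *+ n]scaler_nat scalerA mulVf // scale1r.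
  rewrite opprD addrA addrAC.
  done.
have h1 := sq_sub _ _ (gF w - v) (n%:R^-1 *: \sum_(t < n) u t).
apply: (le_trans h1).
rewrite lerD2l -!mulrA ler_wpM2l // mulrA mulrC.
apply: (le_trans (avg_vec _ _ _ hn _)).
rewrite -mulrA ler_wpM2l ?invr_ge0 ?ler0n // mulr_suml.
apply: ler_sum => t _; rewrite mulrC -expr2; exact: smooth_sq.
Qed.
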